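(* In the simplicial setting, an $\mathcal I$-space $X$ is flat if and only if (a) each morphism $\mathbf m\to\mathbf n$ of $\mathcal I$ induces a cofibration (injection) $X(\mathbf m)\to X(\mathbf n)$, and (b) for all $l,m,n\ge0$, in the commutative square with corners $X(\mathbf m)$, $X(\mathbf m\sqcup\mathbf n)$, $X(\mathbf l\sqcup\mathbf m)$, $X(\mathbf l\sqcup\mathbf m\sqcup\mathbf n)$ and maps induced by the evident order-preserving inclusions, the intersection of the images of $X(\mathbf l\sqcup\mathbf m)$ and $X(\mathbf m\sqcup\mathbf n)$ in $X(\mathbf l\sqcup\mathbf m\sqcup\mathbf n)$ equals the image of $X(\mathbf m)$.
   Context: $\mathcal I$ is the category with objects the finite sets $\mathbf n=\{1,\dots,n\}$, $n\ge0$, and morphisms the injective maps; $\mathbf m\sqcup\mathbf n$ denotes ordered concatenation. An $\mathcal I$-space is a functor from $\mathcal I$ to simplicial sets. For an object $\mathbf n$, let $\partial(\mathcal I\downarrow\mathbf n)$ be the full subcategory of the comma category $(\mathcal I\downarrow\mathbf n)$ on the objects $\mathbf m\to\mathbf n$ that are not isomorphisms; the latching space is $L_{\mathbf n}(X)=\operatorname{colim}_{\partial(\mathcal I\downarrow\mathbf n)}X$ (via the forgetful functor to $\mathcal I$). A map $X\to Y$ is a flat cofibration if $X(\mathbf n)\cup_{L_{\mathbf n}(X)}L_{\mathbf n}(Y)\to Y(\mathbf n)$ is a cofibration for all $\mathbf n$. An $\mathcal I$-space $X$ is flat if $\emptyset\to X$ is a flat cofibration, i.e. $L_{\mathbf n}(X)\to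 X(\mathbf n)$ is a cofibration for all $\mathbf n$. *)

(* Defs.v *)
From mathcomp Require Import all_boot.
From Stdlib Require Import Relations.
Set Implicit Arguments. Unset Strict Implicit. Unset Printing Implicit Defensive.

(* Morphisms of the simplex category Delta: [k] -> [l] are monotone maps
   {0..k} -> {0..l}, i.e. 'I_k.+1 -> 'I_l.+1. *)
Record dmor (k l : nat) := DMor {
  dfun :> 'I_k.+1 -> 'I_l.+1;
  dmono : forall i j : 'I_k.+1, i <= j -> dfun i <= dfun j }.

(* Morphisms of the category I : injective maps n -> m, with n = 'I_n. *)
Record imor (m n : nat) := IMor {
  ifun :> 'I_m -> 'I_n;
  iinj : injective ifun }.

(* An I-space: a functor from I to simplicial sets.
   Xo n k = set of k-simplices of the simplicial set X(n);
   Xs a   = simplicial operator a^* : X(n)_l -> X(n)_k for a : [k] -> [l];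
   Xi f   = f_* : X(m)_k -> X(n)_k for f : m -> n in I.
   Functoriality and identity laws are stated extensionally on the
   underlying maps; Xi f is a map of simplicial sets (naturality). *)
Record Ispace := {
  Xo : nat -> nat -> Type;
  Xs : forall n k l, dmor k l -> Xo n l -> Xo n k;
  Xi : forall m n k, imor m n -> Xo m k -> Xo n k;
  Xs_id : forall n k (a : dmor k k) (x : Xo n k),
      (forall i, a i = i) -> Xs a x = x;
  Xs_comp : forall n k l p (a : dmor k l) (b : dmor l p) (c : dmor k p)
      (x : Xo n p), (forall i, c i = b (a i)) -> Xs c x = Xs a (Xs b x);
  Xi_id : forall n k (f : imor n n) (x : Xo n k),
      (forall i, f i = i) -> Xi f x = x;
  Xi_comp : forall m n p k (f : imor m n) (g : imor n p) (h : imor m p)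
      (x : Xo m k), (forall i, h i = g (f i)) -> Xi h x = Xi g (Xi f x);
  Xi_Xs : forall m n k l (f : imor m n) (a : dmor k l) (x : Xo m l),
      Xi f (Xs a x) = Xs a (Xi f x) }.

Arguments Xs i {n k l} _ _.
Arguments Xi i {m n k} _ _.

(* Latching space L_n(X), at simplicial level k: colimit (computed levelwise,
   in Set) of X over the full subcategory of (I | n) on the non-isomorphisms
   f : m -> n.  Elements of the disjoint union: *)
Record latch_elt (X : Ispace) (n k : nat) := LE {
  le_m : nat;
  le_f : imor le_m n;
  le_nonIso : ~ bijective le_f;
  le_x : Xo X le_m k }.

(* Generating relation of the colimit: (f o h, x) ~ (f, h_* x) for a
   morphism h : (m, f o h) -> (m', f) of the comma category. *)
Definition latch_rel (X : Ispace) n k (a b : latch_elt X n k) : Prop :=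
  exists h : imor (le_m a) (le_m b),
    (forall i, le_f b (h i) = le_f a i) /\ le_x b = Xi X h (le_x a).

Definition latch_map (X : Ispace) n k (a : latch_elt X n k) : Xo X n k :=
  Xi X (le_f a) (le_x a).

(* Cofibrations of simplicial sets are the monomorphisms (levelwise
   injections).  X is flat iff L_n(X) -> X(n) is injective in each level,
   i.e. representatives with equal image are identified in the colimit
   (the equivalence relation generated by latch_rel). *)
Definition flat (X : Ispace) : Prop :=
  forall n k (a b : latch_elt X n k),
    latch_map a = latch_map b ->
    clos_refl_sym_trans _ (@latch_rel X n k) a b.

Definition incl_l (m n : nat) : imor m (m + n) := IMor (@lshift_inj m n).
Definition incl_r (l m : nat) : imor m (l + m) := IMor (@rshift_inj l m).

Lemma incl_lr_inj (l m n : nat) :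
  injective (fun i : 'I_(m + n) => cast_ord (addnA l m n) (rshift l i)).
Proof. by move=> x y /cast_ord_inj /rshift_inj. Qed.

(* m ⊔ n -> l ⊔ m ⊔ n, i |-> l + i  (target written (l + m) + n). *)
Definition incl_lr (l m n : nat) : imor (m + n) (l + m + n) :=
  IMor (@incl_lr_inj l m n).

(* Main.v *)
Require Import Defs.
From mathcomp Require Import all_boot.
From Stdlib Require Import Relations Classical.
Set Implicit Arguments. Unset Strict Implicit. Unset Printing Implicit Defensive.


Definition idm (n : nat) : imor n n := IMor (@inj_id 'I_n).
Definition compm m n p (g : imor n p) (f : imor m n) : imor m p :=
  IMor (inj_comp (@iinj _ _ g) (@iinj _ _ f)).

Lemma Xi_c (X : Ispace) m n p k (g : imor n p) (f : imor m n) (x : Xo X m k) :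
  Xi X g (Xi X f x) = Xi X (compm g f) x.
Proof. by rewrite (Xi_comp (f:=f) (g:=g) (h:=compm g f)). Qed.

Lemma Xi_ext (X : Ispace) m n k (f g : imor m n) (x : Xo X m k) :
  (forall i, f i = g i) -> Xi X f x = Xi X g x.
Proof.
move=> H. rewrite (Xi_comp (f:=idm m) (g:=g) (h:=f)) //.
by rewrite (Xi_id (f:=idm m)).
Qed.

Lemma card_lt m n (f : 'I_m -> 'I_n) : injective f -> ~ bijective f -> m < n.
Proof.
move=> fi nb. have := leq_card f fi. rewrite !card_ord leq_eqVlt.
case/orP=> [/eqP E|//]. exfalso; apply: nb. subst n. exact: injF_bij.
Qed.

Lemma lt_nbij m n (f : 'I_m -> 'I_n) : m < n -> ~ bijective f.
Proof.
move=> lt [g fg gf]. have := leq_card g (can_inj gf). rewrite !card_ord.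
by rewrite leqNgt lt.
Qed.

Definition SP (X : Ispace) n k : Prop :=
  forall p1 p2 (g1 : imor p1 n) (g2 : imor p2 n) y1 y2,
    Xi X g1 y1 = Xi X g2 y2 ->
    exists q (u1 : imor q p1) (u2 : imor q p2) (c : Xo X q k),
      (forall i, g1 (u1 i) = g2 (u2 i)) /\ Xi X u1 c = y1 /\ Xi X u2 c = y2.

Lemma SP_inj (X : Ispace) n k : SP X n k ->
  forall m (f : imor m n), injective (@Xi X m n k f).
Proof.
move=> H m f x y E. have [q [u1 [u2 [c [Hu [<- <-]]]]]] := H _ _ _ _ _ _ E.
apply: Xi_ext => i; exact: (@iinj _ _ f).
Qed.

Lemma bij_span (X : Ispace) n k p1 p2 (g1 : imor p1 n) (g2 : imor p2 n)
  (y1 : Xo X p1 k) y2 : bijective g1 -> Xi X g1 y1 = Xi X g2 y2 ->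
    exists q (u1 : imor q p1) (u2 : imor q p2) (c : Xo X q k),
      (forall i, g1 (u1 i) = g2 (u2 i)) /\ Xi X u1 c = y1 /\ Xi X u2 c = y2.
Proof.
case=> h gh hg E.
pose hi := IMor (can_inj hg).
pose u1 := compm hi g2.
have inj1 : forall w w' : Xo X p1 k, Xi X g1 w = Xi X g1 w' -> w = w'.
  move=> w w' Ew.
  rewrite -(Xi_id (f:=idm p1) w) // -(Xi_id (f:=idm p1) w') //.
  rewrite !(Xi_comp (f:=g1) (g:=hi) (h:=idm p1)) ?Ew //.
exists p2, u1, (idm p2), y2; split; first by move=> i /=; rewrite hg.
split; last by rewrite (Xi_id (f:=idm p2)).
apply: inj1; rewrite Xi_c E; apply: Xi_ext => i /=; by rewrite hg.
Qed.

Definition CL (X : Ispace) n k (a b : latch_elt X n k) : Prop :=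
  exists q (u : imor q (le_m a)) (v : imor q (le_m b)) (c : Xo X q k),
    (forall i, le_f a (u i) = le_f b (v i)) /\ Xi X u c = le_x a /\ Xi X v c = le_x b.

Lemma flat_SP (X : Ispace) : flat X -> forall k n, SP X n k.
Proof.
move=> Hf k; elim/ltn_ind => n IH p1 p2 g1 g2 y1 y2 E.
have [b1|nb1] := classic (bijective g1); first exact: bij_span.
have [b2|nb2] := classic (bijective g2).
  have [q [u1 [u2 [c [H1 [H2 H3]]]]]] := bij_span b2 (esym E).
  by exists q, u2, u1, c; split => //.
have := Hf n k (LE nb1 y1) (LE nb2 y2) E.
suff : forall a b, clos_refl_sym_trans _ (@latch_rel X n k) a b -> CL a b by apply.
move=> a b; elim => {a b}.
- move=> a b [h [Hh Hx]]. exists (le_m a), (idm _), h, (le_x a).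
  by split=> //; split => //; rewrite (Xi_id (f:=idm _)).
- move=> a. exists (le_m a), (idm _), (idm _), (le_x a).
  by split=> //; split; rewrite (Xi_id (f:=idm _)).
- move=> a b _ [q [u [v [c [H1 [H2 H3]]]]]]. exists q, v, u, c. by split.
- move=> a b d _ [q1 [ua [vb [c1 [H1 [H2 H3]]]]]] _ [q2 [ub [vd [c2 [H4 [H5 H6]]]]]].
  have lt : le_m b < n := card_lt (@iinj _ _ (le_f b)) (@le_nonIso _ _ _ b).
  have [q3 [w1 [w2 [c3 [H7 [H8 H9]]]]]] := IH _ lt _ _ vb ub c1 c2 (etrans H3 (esym H5)).
  exists q3, (compm ua w1), (compm vd w2), c3; split.
    by move=> i /=; rewrite H1 H7 H4.
  by rewrite -!Xi_c H8 H9.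
Qed.



Definition sA m m' n (f : 'I_m -> 'I_n) (g : 'I_m' -> 'I_n) :=
  [seq k <- enum 'I_n | (k \in codom f) && (k \notin codom g)].
Definition sI m m' n (f : 'I_m -> 'I_n) (g : 'I_m' -> 'I_n) :=
  [seq k <- enum 'I_n | (k \in codom f) && (k \in codom g)].
Definition sB m m' n (f : 'I_m -> 'I_n) (g : 'I_m' -> 'I_n) :=
  [seq k <- enum 'I_n | (k \notin codom f) && (k \in codom g)].
Definition sS m m' n (f : 'I_m -> 'I_n) (g : 'I_m' -> 'I_n) :=
  sA f g ++ sI f g ++ sB f g.

Lemma memA m m' n (f : 'I_m -> 'I_n) (g : 'I_m' -> 'I_n) x :
  (x \in sA f g) = (x \in codom f) && (x \notin codom g).
Proof. by rewrite /sA mem_filter mem_enum andbT. Qed.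
Lemma memI m m' n (f : 'I_m -> 'I_n) (g : 'I_m' -> 'I_n) x :
  (x \in sI f g) = (x \in codom f) && (x \in codom g).
Proof. by rewrite /sI mem_filter mem_enum andbT. Qed.
Lemma memB m m' n (f : 'I_m -> 'I_n) (g : 'I_m' -> 'I_n) x :
  (x \in sB f g) = (x \notin codom f) && (x \in codom g).
Proof. by rewrite /sB mem_filter mem_enum andbT. Qed.

Lemma sS_uniq m m' n (f : 'I_m -> 'I_n) (g : 'I_m' -> 'I_n) : uniq (sS f g).
Proof.
have U : forall P : pred 'I_n, uniq [seq k <- enum 'I_n | P k].
  by move=> P; apply: filter_uniq; apply: enum_uniq.
rewrite /sS !cat_uniq !U /= !andbT; apply/andP; split.
  apply/hasPn => k /=; rewrite mem_cat memA memI memB.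
  by case: (k \in codom f); case: (k \in codom g).
apply/hasPn => k /=; rewrite memI memB.
by case: (k \in codom f); case: (k \in codom g).
Qed.
Arguments sS_uniq {m m' n} f g.

Lemma sS_size m m' n (f : 'I_m -> 'I_n) (g : 'I_m' -> 'I_n) :
  size (sS f g) == size (sA f g) + size (sI f g) + size (sB f g).
Proof. by rewrite /sS !size_cat addnA. Qed.
Arguments sS_size {m m' n} f g.

Definition eS m m' n (f : 'I_m -> 'I_n) (g : 'I_m' -> 'I_n)
  (k : 'I_(size (sA f g) + size (sI f g) + size (sB f g))) : 'I_n :=
  tnth (Tuple (sS_size f g)) k.
Arguments eS {m m' n} f g k.

Lemma eS_nth m m' n (f : 'I_m -> 'I_n) (g : 'I_m' -> 'I_n) x k :
  eS f g k = nth x (sS f g) k.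
Proof. exact: tnth_nth. Qed.

Lemma eS_inj m m' n (f : 'I_m -> 'I_n) (g : 'I_m' -> 'I_n) : injective (eS f g).
Proof.
move=> i j; have [x0 _] : exists x : 'I_n, True by exists (eS f g i).
rewrite (eS_nth x0 i) (eS_nth x0 j) => E.
have Hs := eqP (sS_size f g).
apply: val_inj; apply/eqP; rewrite -(nth_uniq x0 _ _ (sS_uniq f g)).
- by apply/eqP; exact: E.
- by rewrite Hs; exact: ltn_ord.
- by rewrite Hs; exact: ltn_ord.
Qed.

Lemma eS_val m m' n (f : 'I_m -> 'I_n) (g : 'I_m' -> 'I_n) k x :
  x \in sS f g -> val k = index x (sS f g) -> eS f g k = x.
Proof.
move=> xin E; rewrite (eS_nth x) E. exact: nth_index.
Qed.

Lemma alpha_lt m m' n (f : 'I_m -> 'I_n) (g : 'I_m' -> 'I_n) i :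
  index (f i) (sS f g) < size (sA f g) + size (sI f g).
Proof.
rewrite /sS index_cat; case: ifP => H.
  by rewrite (leq_trans _ (leq_addr _ _)) // index_mem.
rewrite ltn_add2l index_cat.
have : f i \in sI f g.
  by move: H; rewrite memA memI codom_f => /negbT; rewrite negbK.
by move=> Hi; rewrite Hi index_mem.
Qed.
Arguments alpha_lt {m m' n} f g _.

Lemma beta_lt m m' n (f : 'I_m -> 'I_n) (g : 'I_m' -> 'I_n) j :
  index (g j) (sI f g ++ sB f g) < size (sI f g) + size (sB f g).
Proof.
rewrite -size_cat index_mem mem_cat memI memB codom_f.
by case: (g j \in codom f).
Qed.
Arguments beta_lt {m m' n} f g _.

Lemma g_notA m m' n (f : 'I_m -> 'I_n) (g : 'I_m' -> 'I_n) j :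
  (g j \in sA f g) = false.
Proof. by rewrite memA codom_f andbF. Qed.

Lemma sI_codf m m' n (f : 'I_m -> 'I_n) (g : 'I_m' -> 'I_n) (j : 'I_(size (sI f g))) :
  tnth (in_tuple (sI f g)) j \in codom f.
Proof. by have := mem_tnth j (in_tuple (sI f g)); rewrite memI => /andP []. Qed.
Arguments sI_codf {m m' n} f g _.

Lemma sI_codg m m' n (f : 'I_m -> 'I_n) (g : 'I_m' -> 'I_n) (j : 'I_(size (sI f g))) :
  tnth (in_tuple (sI f g)) j \in codom g.
Proof. by have := mem_tnth j (in_tuple (sI f g)); rewrite memI => /andP []. Qed.
Arguments sI_codg {m m' n} f g _.

Lemma sI_tnth_inj m m' n (f : 'I_m -> 'I_n) (g : 'I_m' -> 'I_n) :
  injective (fun j : 'I_(size (sI f g)) => tnth (in_tuple (sI f g)) j).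
Proof.
move=> i j; have [x0 _] : exists x : 'I_n, True by exists (tnth (in_tuple (sI f g)) i).
rewrite (tnth_nth x0 _ i) (tnth_nth x0 _ j) => E.
apply: val_inj; apply/eqP.
rewrite -(nth_uniq x0 (s := sI f g) _ _ (filter_uniq _ (enum_uniq _))).
- by apply/eqP; exact: E.
- exact: ltn_ord.
- exact: ltn_ord.
Qed.
Arguments sI_tnth_inj {m m' n} f g.

Lemma sI_index m m' n (f : 'I_m -> 'I_n) (g : 'I_m' -> 'I_n) (j : 'I_(size (sI f g))) :
  index (tnth (in_tuple (sI f g)) j) (sI f g ++ sB f g) = j.
Proof.
have [x0 _] : exists x : 'I_n, True by exists (tnth (in_tuple (sI f g)) j).
rewrite index_cat mem_tnth (tnth_nth x0).
by rewrite index_uniq // filter_uniq // enum_uniq.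
Qed.

Lemma sI_notA m m' n (f : 'I_m -> 'I_n) (g : 'I_m' -> 'I_n) (j : 'I_(size (sI f g))) :
  (tnth (in_tuple (sI f g)) j \in sA f g) = false.
Proof. by rewrite memA sI_codg andbF. Qed.


Definition alpha_fun m m' n (f : 'I_m -> 'I_n) (g : 'I_m' -> 'I_n) i :
  'I_(size (sA f g) + size (sI f g)) := Ordinal (alpha_lt f g i).
Definition beta_fun m m' n (f : 'I_m -> 'I_n) (g : 'I_m' -> 'I_n) j :
  'I_(size (sI f g) + size (sB f g)) := Ordinal (beta_lt f g j).
Definition u_fun m m' n (f : 'I_m -> 'I_n) (g : 'I_m' -> 'I_n)
  (j : 'I_(size (sI f g))) : 'I_m := iinv (sI_codf f g j).
Arguments u_fun {m m' n} f g j.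
Definition v_fun m m' n (f : 'I_m -> 'I_n) (g : 'I_m' -> 'I_n)
  (j : 'I_(size (sI f g))) : 'I_m' := iinv (sI_codg f g j).
Arguments v_fun {m m' n} f g j.

Lemma e_alpha m m' n (f : 'I_m -> 'I_n) (g : 'I_m' -> 'I_n) i :
  eS f g (lshift (size (sB f g)) (alpha_fun f g i)) = f i.
Proof.
apply: eS_val => //.
rewrite /sS !mem_cat memA memI.
by case: (f i \in codom g); rewrite codom_f.
Qed.

Lemma e_beta m m' n (f : 'I_m -> 'I_n) (g : 'I_m' -> 'I_n) j :
  eS f g (incl_lr (size (sA f g)) (size (sI f g)) (size (sB f g)) (beta_fun f g j)) = g j.
Proof.
apply: eS_val.
  rewrite /sS !mem_cat memI memB codom_f !andbT.
  by case: (g j \in codom f); rewrite ?orbT.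
by rewrite /= /sS index_cat g_notA.
Qed.

Lemma alpha_inj m m' n (f : 'I_m -> 'I_n) (g : 'I_m' -> 'I_n) :
  injective f -> injective (alpha_fun f g).
Proof. move=> fi i j E; apply: fi; by rewrite -(@e_alpha _ _ _ f g i) E e_alpha. Qed.

Lemma beta_inj m m' n (f : 'I_m -> 'I_n) (g : 'I_m' -> 'I_n) :
  injective g -> injective (beta_fun f g).
Proof. move=> gi i j E; apply: gi; by rewrite -(@e_beta _ _ _ f g i) E e_beta. Qed.

Lemma f_u m m' n (f : 'I_m -> 'I_n) (g : 'I_m' -> 'I_n) (j : 'I_(size (sI f g))) :
  f (u_fun f g j) = tnth (in_tuple (sI f g)) j.
Proof. exact: f_iinv. Qed.
Lemma g_v m m' n (f : 'I_m -> 'I_n) (g : 'I_m' -> 'I_n) (j : 'I_(size (sI f g))) :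
  g (v_fun f g j) = tnth (in_tuple (sI f g)) j.
Proof. exact: f_iinv. Qed.

Lemma u_inj m m' n (f : 'I_m -> 'I_n) (g : 'I_m' -> 'I_n) : injective (u_fun f g).
Proof. move=> i j E; apply: (@sI_tnth_inj _ _ _ f g); by rewrite -!f_u E. Qed.
Lemma v_inj m m' n (f : 'I_m -> 'I_n) (g : 'I_m' -> 'I_n) : injective (v_fun f g).
Proof. move=> i j E; apply: (@sI_tnth_inj _ _ _ f g); by rewrite -!g_v E. Qed.

Lemma alpha_u m m' n (f : 'I_m -> 'I_n) (g : 'I_m' -> 'I_n) (j : 'I_(size (sI f g))) :
  alpha_fun f g (u_fun f g j) = rshift (size (sA f g)) j.
Proof.
apply: val_inj; rewrite /= f_u /sS index_cat sI_notA sI_index //.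
Qed.

Lemma beta_v m m' n (f : 'I_m -> 'I_n) (g : 'I_m' -> 'I_n) (j : 'I_(size (sI f g))) :
  beta_fun f g (v_fun f g j) = lshift (size (sB f g)) j.
Proof. apply: val_inj; by rewrite /= g_v sI_index. Qed.

Lemma comm_incl (X : Ispace) l m n k (c : Xo X m k) :
  Xi X (incl_l (l + m) n) (Xi X (incl_r l m) c) =
  Xi X (incl_lr l m n) (Xi X (incl_l m n) c).
Proof. rewrite !Xi_c; apply: Xi_ext => i; exact: val_inj. Qed.


Lemma ab_SP (X : Ispace)
  (Ha : forall m n k (f : imor m n), injective (@Xi X m n k f))
  (Hb : forall l m n k (z : Xo X (l + m + n) k),
      ((exists a : Xo X (l + m) k, Xi X (incl_l (l + m) n) a = z) /\
       (exists b : Xo X (m + n) k, Xi X (incl_lr l m n) b = z)) ->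
      (exists c : Xo X m k,
         Xi X (incl_l (l + m) n) (Xi X (incl_r l m) c) = z)) :
  forall n k, SP X n k.
Proof.
move=> n k m m' f g x y E.
pose e := IMor (@eS_inj _ _ _ f g).
pose al := IMor (@alpha_inj _ _ _ f g (@iinj _ _ f)).
pose be := IMor (@beta_inj _ _ _ f g (@iinj _ _ g)).
pose u := IMor (@u_inj _ _ _ f g).
pose v := IMor (@v_inj _ _ _ f g).
have Hx : Xi X f x = Xi X e (Xi X (incl_l _ _) (Xi X al x)).
  rewrite !Xi_c; apply: Xi_ext => i /=; by rewrite e_alpha.
have Hy : Xi X g y = Xi X e (Xi X (incl_lr _ _ _) (Xi X be y)).
  rewrite !Xi_c; apply: Xi_ext => i /=; by rewrite e_beta.
have Ez : Xi X (incl_l _ _) (Xi X al x) = Xi X (incl_lr _ _ _) (Xi X be y).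
  apply: (Ha _ _ _ e); by rewrite -Hx -Hy.
have [c Hc] := Hb _ _ _ _ (Xi X (incl_l _ _) (Xi X al x))
  (conj (ex_intro _ (Xi X al x) erefl) (ex_intro _ (Xi X be y) (esym Ez))).
have Hc1 : Xi X (incl_r _ _) c = Xi X al x.
  exact: (Ha _ _ _ (incl_l _ (size (sB f g))) _ _ Hc).
exists _, u, v, c; split; first by move=> j /=; rewrite f_u g_v.
split.
  apply: (Ha _ _ _ al); rewrite Xi_c -Hc1; apply: Xi_ext => j /=.
  by rewrite alpha_u.
apply: (Ha _ _ _ be); apply: (Ha _ _ _ (incl_lr (size (sA f g)) _ _)).
rewrite -Ez -Hc1 comm_incl !Xi_c.
apply: Xi_ext => j /=; by rewrite beta_v.
Qed.

Lemma SP_flat (X : Ispace) : (forall n k, SP X n k) -> flat X.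
Proof.
move=> H n k a b E.
have [q [u [v [c [H1 [H2 H3]]]]]] := H n k _ _ _ _ _ _ E.
have lt : q < n.
  apply: (leq_ltn_trans (_ : q <= le_m a)).
    by have := leq_card _ (@iinj _ _ u); rewrite !card_ord.
  exact: card_lt (@iinj _ _ (le_f a)) (@le_nonIso _ _ _ a).
pose d := LE (@lt_nbij _ _ (compm (le_f a) u) lt) c.
apply: (rst_trans _ _ _ d).
  apply: rst_sym; apply: rst_step; exists u; split => //.
apply: rst_step; exists v; split => //= i; by rewrite -H1.
Qed.

Theorem proposition3p9 (X : Ispace) :
  flat X <->
  ((forall m n k (f : imor m n), injective (@Xi X m n k f)) /\
   (forall l m n k (z : Xo X (l + m + n) k),
      ((exists a : Xo X (l + m) k, Xi X (incl_l (l + m) n) a = z) /\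
       (exists b : Xo X (m + n) k, Xi X (incl_lr l m n) b = z)) <->
      (exists c : Xo X m k,
         Xi X (incl_l (l + m) n) (Xi X (incl_r l m) c) = z))).
Proof.
split.
  move=> Hf; have HS := flat_SP Hf.
  split; first by move=> m n k f; apply: SP_inj.
  move=> l m n k z; split.
    move=> [[a Ha] [b Hb]].
    have [q [u1 [u2 [c [Hu [H1 H2]]]]]] := HS k _ _ _ _ _ _ _ (etrans Ha (esym Hb)).
    have Hv : forall i, val (u1 i) = l + val (u2 i).
      by move=> i; have := congr1 val (Hu i).
    have wlt : forall i, val (u2 i) < m.
      by move=> i; have := ltn_ord (u1 i); rewrite Hv ltn_add2l.
    pose w := fun i => Ordinal (wlt i).
    have winj : injective w.
      move=> i j E; apply: (@iinj _ _ u2); apply: val_inj.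
      exact: (congr1 val E).
    exists (Xi X (IMor winj) c).
    rewrite -Ha -H1.
    have -> : Xi X (incl_r l m) (Xi X (IMor winj) c) = Xi X u1 c => //.
    rewrite Xi_c; apply: Xi_ext => i.
    by apply: val_inj; rewrite /= Hv.
  move=> [c Hc]; split.
    by exists (Xi X (incl_r l m) c).
  by exists (Xi X (incl_l m n) c); rewrite -comm_incl.
move=> [Ha Hb]; apply: SP_flat; apply: ab_SP => // l m n k z.
by case: (Hb l m n k z).
Qed.
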